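(* Let $(\mathfrak g,[\cdot,\cdot],\delta,n)$ be an almost NL bialgebra in which $n$ is a Nijenhuis operator, and assume ${}^tn$ is $\mathrm{ad}^*$-equivariant on $(\mathfrak g^*,[\cdot,\cdot]_{\mathfrak g^*})$, i.e. $\delta(\xi)(\eta_1,{}^tn\eta_2)=\delta(n\xi)(\eta_1,\eta_2)$ for all $\xi\in\mathfrak g$, $\eta_1,\eta_2\in\mathfrak g^*$. Then for all integers $i,j\ge0$: $[\cdot,\cdot]_{n^i}$ is a Lie bracket on $\mathfrak g$; $[\cdot,\cdot]^{({}^tn)^j}$ is a Lie bracket on $\mathfrak g^*$ with $\langle[\eta_1,\eta_2]^{({}^tn)^j},\xi\rangle=\delta_{({}^tn)^j}(\xi)(\eta_1,\eta_2)$; and $\delta_{({}^tn)^j}$ is a 1-cocycle for $[\cdot,\cdot]_{n^i}$. Thus $(\mathfrak g,[\cdot,\cdot]_{n^i},\delta^{n^i}_{({}^tn)^j})$, where $\delta^{n^i}_{({}^tn)^j}$ denotes $\delta_{({}^tn)^j}$ regarded as a cochain for $[\cdot,\cdot]_{n^i}$, is a Lie bialgebra for all $i,j\ge0$; moreover the brackets $[\cdot,\cdot]_{n^i}$ ($i\ge0$) are pairwise compatible, as are the brackets $[\cdot,\cdot]^{({}^tn)^j}$ ($j\ge0$) (any linear combination of two of them is again a Lie bracket).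
   Context: $(\mathfrak g,[\cdot,\cdot])$ is a finite-dimensional real Lie algebra; $\langle\mathrm{ad}^*_\xi\eta,\zeta\rangle=-\langle\eta,[\xi,\zeta]\rangle$. Elements of $\wedge^2\mathfrak g$ are skew-symmetric bilinear forms on $\mathfrak g^*$; for linear $\phi:\mathfrak g^*\to\mathfrak g^*$, $(\iota_\phi P)(\eta_1,\eta_2)=P(\phi\eta_1,\eta_2)+P(\eta_1,\phi\eta_2)$; $\mathrm{ad}^{(2)}_\xi=\iota_{\mathrm{ad}^*_\xi}$. A linear $\delta:\mathfrak g\to\wedge^2\mathfrak g$ is a 1-cocycle for $[\cdot,\cdot]$ if $\mathrm{ad}^{(2)}_{\xi_1}\delta(\xi_2)-\mathrm{ad}^{(2)}_{\xi_2}\delta(\xi_1)-\delta([\xi_1,\xi_2])=0$; a Lie bialgebra $(\mathfrak g,[\cdot,\cdot],\delta)$ has such $\delta$ with dual bracket $\langle[\eta_1,\eta_2]_{\mathfrak g^*},\xi\rangle=\delta(\xi)(\eta_1,\eta_2)$ a Lie bracket. ${}^tn$ is the transpose of $n$. For $m:\mathfrak g\to\mathfrak g$ linear, $[\xi_1,\xi_2]_m=[m\xi_1,\xi_2]+[\xi_1,m\xi_2]-m[\xi_1,\xi_2]$ (so $[\cdot,\cdot]_{n^0}=[\cdot,\cdot]$); $m$ is Nijenhuis if $m[\xi_1,\xi_2]_m=[m\xi_1,m\xi_2]$. For $j\ge0$, $[\eta_1,\eta_2]^{({}^tn)^j}=[({}^tn)^j\eta_1,\eta_2]_{\mathfrak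 g^*}+[\eta_1,({}^tn)^j\eta_2]_{\mathfrak g^*}-({}^tn)^j[\eta_1,\eta_2]_{\mathfrak g^*}$ and $\delta_{({}^tn)^j}(\xi)=\iota_{({}^tn)^j}\delta(\xi)-\delta(n^j\xi)$. A 1-cocycle for $[\cdot,\cdot]_{n^i}$ is a linear $\delta'$ with $\iota_{A^i_{\xi_1}}\delta'(\xi_2)-\iota_{A^i_{\xi_2}}\delta'(\xi_1)-\delta'([\xi_1,\xi_2]_{n^i})=0$, where $A^i_\xi=[({}^tn)^i,\mathrm{ad}^*_\xi]+\mathrm{ad}^*_{n^i\xi}$. An almost NL bialgebra $(\mathfrak g,[\cdot,\cdot],\delta,n)$ is a Lie bialgebra with linear $n$ such that $[\cdot,\cdot]_n$ is a Lie bracket, $\delta$ is a 1-cocycle for $[\cdot,\cdot]_n$, and $[\cdot,\cdot]^{{}^tn}$ is a Lie bracket on $\mathfrak g^*$. *)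

(* Defs.v *)
(* g = R^d (row vectors), g^* identified with R^d via the
   standard pairing; linear maps g -> g are d x d matrices acting on the right. *)
From HB Require Import structures.
From mathcomp Require Import all_boot all_order all_algebra.
From mathcomp Require Import reals.
Set Implicit Arguments. Unset Strict Implicit. Unset Printing Implicit Defensive.
Import Order.TTheory GRing.Theory Num.Theory.
Local Open Scope ring_scope.

Section Defs.
Variables (R : realType) (d : nat).
Local Notation V := 'rV[R]_d.

Definition pair (eta xi : V) : R := \sum_(k < d) eta 0 k * xi 0 k.
Definition ev (k : 'I_d) : V := delta_mx 0 k.

Definition is_bilinear (b : V -> V -> V) : Prop :=
  (forall (a : R) x y z, b (a *: x + y) z = a *: b x z + b y z) /\
  (forall (a : R) x y z, b z (a *: x + y) = a *: b z x + b z y).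

Definition is_lie_bracket (b : V -> V -> V) : Prop :=
  is_bilinear b /\ (forall x, b x x = 0) /\
  (forall x y z, b x (b y z) + b y (b z x) + b z (b x y) = 0).

(* elements of wedge^2 g : skew-symmetric bilinear forms on g^* *)
Definition is_wedge2 (P : V -> V -> R) : Prop :=
  (forall (a : R) x y z, P (a *: x + y) z = a * P x z + P y z) /\
  (forall (a : R) x y z, P z (a *: x + y) = a * P z x + P z y) /\
  (forall x y, P x y = - P y x).

Definition is_cochain (dl : V -> V -> V -> R) : Prop :=
  (forall xi, is_wedge2 (dl xi)) /\
  (forall (a : R) x y e1 e2, dl (a *: x + y) e1 e2 = a * dl x e1 e2 + dl y e1 e2).

(* ad^*_xi eta, characterised by <ad^*_xi eta, zeta> = - <eta, [xi, zeta]> *)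
Definition adstar (br : V -> V -> V) (xi eta : V) : V :=
  \row_k (- pair eta (br xi (ev k))).

Definition iota (phi : V -> V) (P : V -> V -> R) : V -> V -> R :=
  fun e1 e2 => P (phi e1) e2 + P e1 (phi e2).

(* dual bracket: <[e1,e2]_{g^*}, xi> = dl(xi)(e1,e2) *)
Definition dualbr (dl : V -> V -> V -> R) (e1 e2 : V) : V :=
  \row_k dl (ev k) e1 e2.

Definition deform (b : V -> V -> V) (m : V -> V) : V -> V -> V :=
  fun x y => b (m x) y + b x (m y) - m (b x y).

Definition nmap (N : 'M[R]_d) (i : nat) (xi : V) : V := xi *m (N ^+ i).
Definition tnmap (N : 'M[R]_d) (j : nat) (eta : V) : V := eta *m (N^T ^+ j).

Definition Amap (br : V -> V -> V) (N : 'M[R]_d) (i : nat) (xi : V) : V -> V :=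
  fun eta => tnmap N i (adstar br xi eta) - adstar br xi (tnmap N i eta)
             + adstar br (nmap N i xi) eta.

(* 1-cocycle condition, relative to a family of operators adop (ad^* or A^i)
   and a bracket b *)
Definition cocycle (adop : V -> V -> V) (b : V -> V -> V)
  (dl : V -> V -> V -> R) : Prop :=
  forall x y e1 e2,
    iota (adop x) (dl y) e1 e2 - iota (adop y) (dl x) e1 e2 - dl (b x y) e1 e2 = 0.

Definition is_lie_bialgebra (br : V -> V -> V) (dl : V -> V -> V -> R) : Prop :=
  is_lie_bracket br /\ is_cochain dl /\ cocycle (adstar br) br dl /\
  is_lie_bracket (dualbr dl).

Definition delta_tn (dl : V -> V -> V -> R) (N : 'M[R]_d) (j : nat) :
  V -> V -> V -> R :=
  fun xi e1 e2 => iota (tnmap N j) (dl xi) e1 e2 - dl (nmap N j xi) e1 e2.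

Definition is_nijenhuis (br : V -> V -> V) (N : 'M[R]_d) : Prop :=
  forall x y, nmap N 1 (deform br (nmap N 1) x y) = br (nmap N 1 x) (nmap N 1 y).

Definition is_almost_NL (br : V -> V -> V) (dl : V -> V -> V -> R)
  (N : 'M[R]_d) : Prop :=
  is_lie_bialgebra br dl /\
  is_lie_bracket (deform br (nmap N 1)) /\
  cocycle (Amap br N 1) (deform br (nmap N 1)) dl /\
  is_lie_bracket (deform (dualbr dl) (tnmap N 1)).

End Defs.

(* Main.v *)
Require Import Defs.
From HB Require Import structures.
From mathcomp Require Import all_boot all_order all_algebra.
From mathcomp Require Import reals.
From mathcomp Require Import ring lra.
Import Order.TTheory GRing.Theory Num.Theory.
Local Open Scope ring_scope.
Set Implicit Arguments. Unset Strict Implicit.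

Section S.
Variables (R : realType) (d : nat).
Local Notation V := 'rV[R]_d.
Local Notation M := 'M[R]_d.
Local Notation ev := (@ev R d).

Lemma trX (N : M) k : (N ^+ k)^T = N^T ^+ k.
Proof.
elim: k => [|k IH]; first by rewrite !expr0 trmx1.
by rewrite exprS exprSr -mulmxE trmx_mul IH mulmxE.
Qed.

Lemma eD (u v : V) k : (u + v) 0 k = u 0 k + v 0 k. Proof. by rewrite mxE. Qed.
Lemma eN (u : V) k : (- u) 0 k = - u 0 k. Proof. by rewrite mxE. Qed.
Lemma eB (u v : V) k : (u - v) 0 k = u 0 k - v 0 k. Proof. by rewrite !mxE. Qed.
Lemma eZ a (u : V) k : (a *: u) 0 k = a * u 0 k. Proof. by rewrite mxE. Qed.
Lemma e0 k : (0 : V) 0 k = 0. Proof. by rewrite mxE. Qed.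

Lemma pair_ev (v : V) k : pair v (ev k) = v 0 k.
Proof.
rewrite /pair (bigD1 k) //= big1 ?addr0; first by rewrite mxE !eqxx mulr1.
by move=> l lk; rewrite mxE (negbTE lk) andbF mulr0.
Qed.

Lemma pair_mx (e z : V) (P : M) : pair (e *m P^T) z = pair e (z *m P).
Proof.
rewrite /pair.
under eq_bigr do rewrite mxE big_distrl.
under [RHS]eq_bigr do rewrite mxE big_distrr.
rewrite exchange_big; apply: eq_bigr => i _; apply: eq_bigr => j _.
by rewrite mxE /= -mulrA [P j i * _]mulrC.
Qed.

Section LinV.
Variables (W : lmodType R) (f : V -> W).
Hypothesis Hf : forall a x y, f (a *: x + y) = a *: f x + f y.
Lemma fD x y : f (x + y) = f x + f y. Proof. by have := Hf 1 x y; rewrite !scale1r. Qed.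
Lemma f0 : f 0 = 0.
Proof. have h := fD 0 0; rewrite addr0 in h; by apply/(addrI (f 0)); rewrite addr0 -h. Qed.
Lemma fZ a x : f (a *: x) = a *: f x. Proof. by rewrite -[_ *: x]addr0 Hf f0 addr0. Qed.
Lemma fN x : f (- x) = - f x. Proof. by rewrite -(scaleN1r x) fZ scaleN1r. Qed.
Lemma fB x y : f (x - y) = f x - f y. Proof. by rewrite fD fN. Qed.
Lemma fsum (I : finType) (c : I -> R) (v : I -> V) :
  f (\sum_i c i *: v i) = \sum_i c i *: f (v i).
Proof.
elim/big_rec2: _ => [|i y1 y2 _ <-]; first exact: f0.
by rewrite Hf.
Qed.
End LinV.

Section LinS.
Variables (f : V -> R).
Hypothesis Hf : forall a x y, f (a *: x + y) = a * f x + f y.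
Lemma sD x y : f (x + y) = f x + f y. Proof. by have := Hf 1 x y; rewrite scale1r mul1r. Qed.
Lemma s0 : f 0 = 0.
Proof. have h := sD 0 0; rewrite addr0 in h; by apply/(addrI (f 0)); rewrite addr0 -h. Qed.
Lemma sZ a x : f (a *: x) = a * f x. Proof. by rewrite -[_ *: x]addr0 Hf s0 addr0. Qed.
Lemma sN x : f (- x) = - f x. Proof. by rewrite -(scaleN1r x) sZ mulN1r. Qed.
Lemma sB x y : f (x - y) = f x - f y. Proof. by rewrite sD sN. Qed.
Lemma ssum (I : finType) (c : I -> R) (v : I -> V) :
  f (\sum_i c i *: v i) = \sum_i c i * f (v i).
Proof.
elim/big_rec2: _ => [|i y1 y2 _ <-]; first exact: s0.
by rewrite Hf.
Qed.
End LinS.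

Lemma pair_sym (u v : V) : pair u v = pair v u.
Proof. by apply: eq_bigr => i _; rewrite mulrC. Qed.

Lemma pair_linr (e : V) a x y : pair e (a *: x + y) = a * pair e x + pair e y.
Proof.
rewrite /pair mulr_sumr -big_split; apply: eq_bigr => i _; rewrite !mxE /=; ring.
Qed.
Lemma pair_linl (e : V) a x y : pair (a *: x + y) e = a * pair x e + pair y e.
Proof. by rewrite !(pair_sym _ e) pair_linr. Qed.

Lemma vec_decomp (z : V) : z = \sum_k z 0 k *: ev k.
Proof. exact: row_sum_delta. Qed.

Lemma pair_ev_l (v : V) k : pair (ev k) v = v 0 k.
Proof. by rewrite pair_sym pair_ev. Qed.

Lemma entry_mx (v : V) (P : M) k : (v *m P) 0 k = pair v (ev k *m P^T).
Proof. by rewrite -pair_mx trmxK pair_ev. Qed.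

Lemma vec_ext (u v : V) : (forall k, pair u (ev k) = pair v (ev k)) -> u = v.
Proof. by move=> h; apply/rowP => k; rewrite -!pair_ev h. Qed.

Section Br.
Variable (b : V -> V -> V).
Hypothesis Hb : is_bilinear b.
Let Hl z : forall a x y, b (a *: x + y) z = a *: b x z + b y z := fun a x y => Hb.1 a x y z.
Let Hr z : forall a x y, b z (a *: x + y) = a *: b z x + b z y := fun a x y => Hb.2 a x y z.
Lemma blD x y z : b (x + y) z = b x z + b y z. Proof. exact: (fD (Hl z)). Qed.
Lemma blB x y z : b (x - y) z = b x z - b y z. Proof. exact: (fB (Hl z)). Qed.
Lemma blN x z : b (- x) z = - b x z. Proof. exact: (fN (Hl z)). Qed.
Lemma blZ a x z : b (a *: x) z = a *: b x z. Proof. exact: (fZ (Hl z)). Qed.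
Lemma bl0 z : b 0 z = 0. Proof. exact: (f0 (Hl z)). Qed.
Lemma brD x y z : b z (x + y) = b z x + b z y. Proof. exact: (fD (Hr z)). Qed.
Lemma brB x y z : b z (x - y) = b z x - b z y. Proof. exact: (fB (Hr z)). Qed.
Lemma brN x z : b z (- x) = - b z x. Proof. exact: (fN (Hr z)). Qed.
Lemma brZ a x z : b z (a *: x) = a *: b z x. Proof. exact: (fZ (Hr z)). Qed.
Lemma br0 z : b z 0 = 0. Proof. exact: (f0 (Hr z)). Qed.

Lemma pair_adstar x e z : pair (adstar b x e) z = - pair e (b x z).
Proof.
rewrite {2}(vec_decomp z) (fsum (Hr x)) (ssum (@pair_linr e)) -sumrN.
rewrite /pair; apply: eq_bigr => k _; by rewrite mxE /pair mulNr mulrC.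
Qed.
End Br.

Definition Tq (b : V -> V -> V) (A B : M) x y :=
  b (x *m A) (y *m B) - b x (y *m B) *m A - b (x *m A) y *m B + b x y *m B *m A.


Lemma lie_skew (b : V -> V -> V) : is_lie_bracket b -> forall x y, b x y = - b y x.
Proof.
move=> [Hb [Ha _]] x y; have := Ha (x + y).
rewrite (blD Hb) !(brD Hb) !Ha add0r addr0 => /eqP; rewrite addr_eq0 => /eqP //.
Qed.

Lemma entry0 (v : V) : v = 0 -> forall k, v 0 k = 0.
Proof. by move=> -> k; rewrite e0. Qed.

Ltac expd Hb := rewrite ?(mulmxDl, mulmxBl, mulNmx, blD Hb, blB Hb, blN Hb,
  brD Hb, brB Hb, brN Hb, bl0 Hb, br0 Hb, mul0mx, addr0, add0r, subr0, oppr0).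
Ltac ent k := rewrite ?(eD, eB, eN, e0, eZ).

Lemma lie_deform (b : V -> V -> V) (A : M) :
  is_lie_bracket b -> (forall x y, Tq b A A x y = 0) ->
  is_lie_bracket (deform b (fun x => x *m A)).
Proof.
move=> Hl HT; have [Hb [Ha Hj]] := Hl.
have Hs := lie_skew Hl.
split; [split|split].
- move=> a x y z; rewrite /deform; expd Hb.
  rewrite ?(mulmxDl, blD Hb, brD Hb, blZ Hb, brZ Hb, mulmxBl, blB Hb, brB Hb) -?scalemxAl ?(blZ Hb, brZ Hb, mulmxDl, blD Hb, brD Hb) -?scalemxAl; apply/rowP => k; ent k; ring.
- move=> a x y z; rewrite /deform; expd Hb.
  rewrite ?(mulmxDl, blD Hb, brD Hb, blZ Hb, brZ Hb, mulmxBl, blB Hb, brB Hb) -?scalemxAl ?(blZ Hb, brZ Hb, mulmxDl, blD Hb, brD Hb) -?scalemxAl; apply/rowP => k; ent k; ring.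
- move=> x; rewrite /deform Ha mul0mx subr0 (Hs x); exact: subrr.
move=> x y z; rewrite /deform.
have J1 := Hj (x *m A) (y *m A) z.
have J2 := Hj (x *m A) y (z *m A).
have J3 := Hj x (y *m A) (z *m A).
have J4 : (b (x *m A) (b y z) + b y (b z (x *m A)) + b z (b (x *m A) y)) *m A = 0 by rewrite Hj mul0mx.
have J5 : (b x (b (y *m A) z) + b (y *m A) (b z x) + b z (b x (y *m A))) *m A = 0 by rewrite Hj mul0mx.
have J6 : (b x (b y (z *m A)) + b y (b (z *m A) x) + b (z *m A) (b x y)) *m A = 0 by rewrite Hj mul0mx.
have J7 : (b x (b y z) + b y (b z x) + b z (b x y)) *m A *m A = 0 by rewrite Hj !mul0mx.
have T1 := HT x (b y z). have T2 := HT y (b z x). have T3 := HT z (b x y).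
have T4 : b x (Tq b A A y z) = 0 by rewrite HT br0.
have T5 : b y (Tq b A A z x) = 0 by rewrite HT br0.
have T6 : b z (Tq b A A x y) = 0 by rewrite HT br0.
move: J1 J2 J3 J4 J5 J6 J7 T1 T2 T3 T4 T5 T6; rewrite /Tq; expd Hb.
move=> J1 J2 J3 J4 J5 J6 J7 T1 T2 T3 T4 T5 T6.
apply/rowP => k.
move: (entry0 J1 k) (entry0 J2 k) (entry0 J3 k) (entry0 J4 k) (entry0 J5 k) (entry0 J6 k) (entry0 J7 k)
  (entry0 T1 k) (entry0 T2 k) (entry0 T3 k) (entry0 T4 k) (entry0 T5 k) (entry0 T6 k).
ent k. move=> *. lra.
Qed.


Lemma lie_ext (f g : V -> V -> V) : (forall x y, f x y = g x y) ->
  is_lie_bracket f -> is_lie_bracket g.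
Proof.
move=> E [[H1 H2] [H3 H4]]; split; [split|split].
- by move=> a x y z; rewrite -!E H1.
- by move=> a x y z; rewrite -!E H2.
- by move=> x; rewrite -E H3.
- by move=> x y z; rewrite -!E H4.
Qed.

Section TqS.
Variable (b : V -> V -> V).
Hypothesis Hb : is_bilinear b.

Lemma Tq_shift (N A B : M) x y :
  Tq b (N * A) B x y = Tq b A B (x *m N) y + Tq b N B x y *m A.
Proof.
rewrite /Tq -!mulmxE !mulmxA; expd Hb; apply/rowP => k; ent k; ring.
Qed.

Lemma Tq_skew (A B : M) x y : is_lie_bracket b -> A * B = B * A ->
  Tq b A B x y = - Tq b B A y x.
Proof.
move=> Hl AB; have Hs := lie_skew Hl.
have E : forall v : V, v *m A *m B = v *m B *m A by move=> v; rewrite -!mulmxA !mulmxE AB.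
rewrite /Tq E (Hs y x) (Hs y (x *m A)) (Hs (y *m B) x) (Hs (y *m B) (x *m A)).
rewrite ?(mulNmx); apply/rowP => k; ent k; ring.
Qed.

Lemma Tq1 B x y : Tq b 1 B x y = 0.
Proof. by rewrite /Tq !mulmx1 subrr sub0r addrC subrr. Qed.

Lemma TqDl (A1 A2 B : M) c x y :
  Tq b (c *: A1 + A2) B x y = c *: Tq b A1 B x y + Tq b A2 B x y.
Proof.
rewrite /Tq !mulmxDr -!scalemxAr; expd Hb.
rewrite ?(blZ Hb, brZ Hb) -?scalemxAl ?(blZ Hb, brZ Hb) -?scalemxAl.
apply/rowP => k; ent k; ring.
Qed.

Lemma TqDr (A B1 B2 : M) c x y :
  Tq b A (c *: B1 + B2) x y = c *: Tq b A B1 x y + Tq b A B2 x y.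
Proof.
rewrite /Tq !mulmxDr -!scalemxAr; expd Hb.
rewrite ?(blZ Hb, brZ Hb) -?scalemxAl ?(blZ Hb, brZ Hb) -?scalemxAl ?mulmxDl -?scalemxAl.
apply/rowP => k; ent k; ring.
Qed.
Lemma TqZl (A B : M) c x y : Tq b (c *: A) B x y = c *: Tq b A B x y.
Proof.
rewrite /Tq -!scalemxAr; expd Hb.
rewrite ?(blZ Hb, brZ Hb) -?scalemxAl ?(blZ Hb, brZ Hb) -?scalemxAl.
apply/rowP => k; ent k; ring.
Qed.
Lemma TqZr (A B : M) c x y : Tq b A (c *: B) x y = c *: Tq b A B x y.
Proof.
rewrite /Tq -!scalemxAr; expd Hb.
rewrite ?(blZ Hb, brZ Hb) -?scalemxAl ?(blZ Hb, brZ Hb) -?scalemxAl.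
apply/rowP => k; ent k; ring.
Qed.
End TqS.

Lemma Tq_pow (b : V -> V -> V) (N : M) : is_lie_bracket b ->
  (forall x y, Tq b N N x y = 0) -> forall p q x y, Tq b (N ^+ p) (N ^+ q) x y = 0.
Proof.
move=> Hl HN; have Hb := Hl.1.
have H1 : forall q x y, Tq b (N ^+ q) N x y = 0.
  elim=> [|q IH] x y; first by rewrite expr0 Tq1.
  by rewrite exprS Tq_shift // IH HN mul0mx addr0.
have H2 : forall q x y, Tq b N (N ^+ q) x y = 0.
  by move=> q x y; rewrite Tq_skew // ?H1 ?oppr0 // -exprS -exprSr.
elim=> [|p IH] q x y; first by rewrite expr0 Tq1.
by rewrite exprS Tq_shift // IH H2 mul0mx addr0.
Qed.


Lemma prD (e x y : V) : pair e (x + y) = pair e x + pair e y. Proof. exact: (sD (@pair_linr e)). Qed.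
Lemma prB (e x y : V) : pair e (x - y) = pair e x - pair e y. Proof. exact: (sB (@pair_linr e)). Qed.
Lemma prN (e x : V) : pair e (- x) = - pair e x. Proof. exact: (sN (@pair_linr e)). Qed.
Lemma pr0 (e : V) : pair e 0 = 0. Proof. exact: (s0 (@pair_linr e)). Qed.

Lemma entry_mxT (v : V) (P : M) k : (v *m P^T) 0 k = pair v (ev k *m P).
Proof. by rewrite entry_mx trmxK. Qed.

Definition Cc (b : V -> V -> V) (dl : V -> V -> V -> R) x y a c :=
  Defs.iota (adstar b x) (dl y) a c - Defs.iota (adstar b y) (dl x) a c - dl (b x y) a c.

Lemma Cc_ext b (dl dl' : V -> V -> V -> R) :
  (forall w u v, dl w u v = dl' w u v) -> forall x y a c, Cc b dl x y a c = Cc b dl' x y a c.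
Proof. by move=> E x y a c; rewrite /Cc /Defs.iota !E. Qed.

Lemma adstar_deform (b : V -> V -> V) (A : M) : is_bilinear b -> forall x e,
  adstar (deform b (fun x => x *m A)) x e =
  adstar b x e *m A^T - adstar b x (e *m A^T) + adstar b (x *m A) e.
Proof.
move=> Hb x e; apply/rowP => k.
rewrite eD eB !entry_mxT !mxE !pair_adstar // pair_mx /deform prB prD.
ring.
Qed.

Section Coch.
Variable (dl : V -> V -> V -> R).
Hypothesis Hd : is_cochain dl.
Lemma dA1 x y a c : dl (x + y) a c = dl x a c + dl y a c.
Proof. exact: (sD (f := fun x => dl x a c) (fun s x y => Hd.2 s x y a c)). Qed.
Lemma dB1 x y a c : dl (x - y) a c = dl x a c - dl y a c.
Proof. exact: (sB (f := fun x => dl x a c) (fun s x y => Hd.2 s x y a c)). Qed.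
Lemma dN1 x a c : dl (- x) a c = - dl x a c.
Proof. exact: (sN (f := fun x => dl x a c) (fun s x y => Hd.2 s x y a c)). Qed.
Lemma dZ1 s x a c : dl (s *: x) a c = s * dl x a c.
Proof. exact: (sZ (f := fun x => dl x a c) (fun s x y => Hd.2 s x y a c)). Qed.
Lemma dA2 w x y c : dl w (x + y) c = dl w x c + dl w y c.
Proof. exact: (sD (f := fun x => dl w x c) (fun s x y => (Hd.1 w).1 s x y c)). Qed.
Lemma dB2 w x y c : dl w (x - y) c = dl w x c - dl w y c.
Proof. exact: (sB (f := fun x => dl w x c) (fun s x y => (Hd.1 w).1 s x y c)). Qed.
Lemma dN2 w x c : dl w (- x) c = - dl w x c.
Proof. exact: (sN (f := fun x => dl w x c) (fun s x y => (Hd.1 w).1 s x y c)). Qed.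
Lemma dZ2 w s x c : dl w (s *: x) c = s * dl w x c.
Proof. exact: (sZ (f := fun x => dl w x c) (fun s x y => (Hd.1 w).1 s x y c)). Qed.
Lemma dA3 w x y c : dl w c (x + y) = dl w c x + dl w c y.
Proof. exact: (sD (f := fun x => dl w c x) (fun s x y => (Hd.1 w).2.1 s x y c)). Qed.
Lemma dB3 w x y c : dl w c (x - y) = dl w c x - dl w c y.
Proof. exact: (sB (f := fun x => dl w c x) (fun s x y => (Hd.1 w).2.1 s x y c)). Qed.
Lemma dN3 w x c : dl w c (- x) = - dl w c x.
Proof. exact: (sN (f := fun x => dl w c x) (fun s x y => (Hd.1 w).2.1 s x y c)). Qed.
Lemma dZ3 w s x c : dl w c (s *: x) = s * dl w c x.
Proof. exact: (sZ (f := fun x => dl w c x) (fun s x y => (Hd.1 w).2.1 s x y c)). Qed.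
Lemma dsk w u v : dl w u v = - dl w v u.
Proof. exact: ((Hd.1 w).2.2 u v). Qed.

Lemma pair_dualbr u v x : pair (dualbr dl u v) x = dl x u v.
Proof.
rewrite {2}(vec_decomp x) (ssum (f := fun x => dl x u v) (fun s x y => Hd.2 s x y u v)).
by rewrite /pair; apply: eq_bigr => k _; rewrite mxE mulrC.
Qed.

Variable (A : M).
Hypothesis HE : forall w u v, dl w u (v *m A^T) = dl (w *m A) u v.
Lemma HEl w u v : dl w (u *m A^T) v = dl (w *m A) u v.
Proof. by rewrite dsk HE -dsk. Qed.
End Coch.

Ltac expdl Hd := rewrite ?(dA1 Hd, dB1 Hd, dN1 Hd, dA2 Hd, dB2 Hd, dN2 Hd, dA3 Hd, dB3 Hd, dN3 Hd).

Lemma F_id (b : V -> V -> V) (dl : V -> V -> V -> R) (A : M) :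
  is_bilinear b -> is_cochain dl ->
  (forall w u v, dl w u (v *m A^T) = dl (w *m A) u v) ->
  forall x y a c,
  Cc (deform b (fun x => x *m A)) dl x y a c =
  Cc b dl (x *m A) y a c + Cc b dl x (y *m A) a c - Cc b dl x y (a *m A^T) c
  - Cc b dl x y a (c *m A^T) + Cc b (fun w => dl (w *m A)) x y a c.
Proof.
move=> Hb Hd HE x y a c.
rewrite /Cc /Defs.iota !adstar_deform // /deform.
expdl Hd. rewrite ?(HE, HEl Hd HE).
rewrite ?(dsk Hd _ a (adstar _ _ _)) ?(dsk Hd _ (a *m A^T) (adstar _ _ _)) ?(HE, HEl Hd HE).
lra.
Qed.


Definition Bop (b : V -> V -> V) (A : M) x a := adstar b x a *m A^T - adstar b x (a *m A^T).

Lemma K_id (b : V -> V -> V) (dl : V -> V -> V -> R) (A : M) :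
  is_bilinear b -> is_cochain dl ->
  (forall w u v, dl w u (v *m A^T) = dl (w *m A) u v) ->
  forall x y a c,
  Cc b (fun w => dl (w *m A)) x y a c =
  Cc b dl x y (a *m A^T) c + dl y (Bop b A x a) c - dl x (Bop b A y a) c.
Proof.
move=> Hb Hd HE x y a c.
rewrite /Cc /Defs.iota /Bop.
expdl Hd. rewrite ?(HE, HEl Hd HE).
rewrite ?(dsk Hd _ (a *m A^T) (adstar _ _ _)) ?(HE, HEl Hd HE).
lra.
Qed.

Lemma Bnij (b : V -> V -> V) (A : M) : is_bilinear b ->
  (forall x y, Tq b A A x y = 0) ->
  forall x a, Bop b A (x *m A) a = Bop b A x (a *m A^T).
Proof.
move=> Hb HT x a; apply/rowP => k.
have := congr1 (pair a) (HT x (ev k)).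
rewrite /Bop !eB !entry_mxT !pair_adstar // !pair_mx /Tq.
rewrite ?(prD, prB, prN, pr0) => h.
rewrite -!pair_ev !pair_adstar // !pair_mx. lra.
Qed.

Lemma K_lem (b : V -> V -> V) (dl : V -> V -> V -> R) (A : M) :
  is_bilinear b -> is_cochain dl ->
  (forall w u v, dl w u (v *m A^T) = dl (w *m A) u v) ->
  (forall x y, Tq b A A x y = 0) ->
  (forall x y a c, Cc b dl x y a c = 0) ->
  (forall x y a c, Cc b (fun w => dl (w *m A)) x y a c = 0) ->
  (forall x y a c, Cc b (fun w => dl (w *m A *m A)) x y a c = 0).
Proof.
move=> Hb Hd HE HT Z0 Z1.
have Hd' : is_cochain (fun w => dl (w *m A)).
  split; first by move=> w; exact: Hd.1.
  by move=> s x y e1 e2; rewrite mulmxDl -scalemxAl Hd.2.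
have HE' : forall w u v, dl (w *m A) u (v *m A^T) = dl (w *m A *m A) u v by move=> *; rewrite HE.
pose S x y a c := dl y (Bop b A x a) c.
have Ssym : forall x y a c, S x y a c = S y x a c.
  move=> x y a c; have := K_id Hb Hd HE x y a c; rewrite Z0 Z1 /S; lra.
have SA : forall u w a c, S u (w *m A) a c = S u w a (c *m A^T) by move=> *; rewrite /S HE.
have SB : forall u w a c, S (u *m A) w a c = S u w (a *m A^T) c by move=> *; rewrite /S Bnij.
move=> x y a c.
have := K_id Hb Hd' HE' x y a c.
rewrite Z1 add0r => ->.
have: S x (y *m A) a c = S y (x *m A) a c.
  by rewrite Ssym SB Ssym -SB Ssym.
rewrite /S; lra.
Qed.


Lemma cochain_ext (f g : V -> V -> V -> R) : (forall w u v, f w u v = g w u v) ->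
  is_cochain f -> is_cochain g.
Proof.
move=> E [H1 H2]; split.
- move=> xi; have [a1 [a2 a3]] := H1 xi; split; [|split].
  + by move=> s x y z; rewrite -!E a1.
  + by move=> s x y z; rewrite -!E a2.
  + by move=> x y; rewrite -!E a3.
- by move=> s x y e1 e2; rewrite -!E H2.
Qed.

Lemma lie_scaled (nu : V -> V -> V) (P : M) : is_lie_bracket nu ->
  (forall u v, nu (u *m P) v = nu u v *m P) -> (forall u v, nu u (v *m P) = nu u v *m P) ->
  is_lie_bracket (fun u v => nu u v *m P).
Proof.
move=> [[H1 H2] [H3 H4]] EL ER; split; [split|split].
- by move=> s x y z /=; rewrite H1 mulmxDl scalemxAl.
- by move=> s x y z /=; rewrite H2 mulmxDl scalemxAl.
- by move=> x /=; rewrite H3 mul0mx.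
- by move=> x y z /=; rewrite !ER -!mulmxDl H4 !mul0mx.
Qed.

Lemma mxpow (N : M) (w : V) p q : w *m N ^+ p *m N ^+ q = w *m N ^+ (p + q).
Proof. by rewrite -mulmxA mulmxE -exprD. Qed.

Section Main.
Variables (br : V -> V -> V) (dl : V -> V -> V -> R) (N : M).
Hypothesis HNL : is_almost_NL br dl N.
Hypothesis HNij : is_nijenhuis br N.
Hypothesis Heq : forall xi e1 e2, dl xi e1 (tnmap N 1 e2) = dl (nmap N 1 xi) e1 e2.

Let Hl : is_lie_bracket br := HNL.1.1.
Let Hb : is_bilinear br := HNL.1.1.1.
Let Hd : is_cochain dl := HNL.1.2.1.
Let Hc0 : cocycle (adstar br) br dl := HNL.1.2.2.1.
Let Hnu : is_lie_bracket (dualbr dl) := HNL.1.2.2.2.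
Let Hc1 : cocycle (Amap br N 1) (deform br (nmap N 1)) dl := HNL.2.2.1.

Lemma TN x y : Tq br N N x y = 0.
Proof.
have := HNij x y; rewrite /nmap /deform expr1; expd Hb => /rowP h.
apply/rowP => k; have := h k; rewrite /Tq; expd Hb; ent k; lra.
Qed.

Lemma dlX k xi e1 e2 : dl xi e1 (e2 *m (N ^+ k)^T) = dl (xi *m N ^+ k) e1 e2.
Proof.
elim: k xi e1 e2 => [|k IH] xi e1 e2; first by rewrite expr0 trmx1 !mulmx1.
rewrite trX exprSr -mulmxE mulmxA -trX.
have := Heq xi e1 (e2 *m (N ^+ k)^T); rewrite /tnmap /nmap expr1 => ->.
by rewrite IH mxpow add1n.
Qed.

Lemma dlXl k xi e1 e2 : dl xi (e1 *m (N ^+ k)^T) e2 = dl (xi *m N ^+ k) e1 e2.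
Proof. by rewrite (dsk Hd) dlX -(dsk Hd). Qed.

Definition Dm j w := dl (w *m N ^+ j).

Lemma Dm_coch j : is_cochain (Dm j).
Proof.
split; first by move=> w; exact: Hd.1.
by move=> s x y e1 e2; rewrite /Dm mulmxDl -scalemxAl Hd.2.
Qed.

Lemma Dm_HE j i w u v : Dm j w u (v *m (N ^+ i)^T) = Dm j (w *m N ^+ i) u v.
Proof. by rewrite /Dm dlX !mxpow addnC. Qed.

Lemma Amap_eq i x e : Amap br N i x e = adstar (deform br (fun x => x *m N ^+ i)) x e.
Proof. by rewrite adstar_deform // /Amap /tnmap /nmap trX. Qed.

Lemma Z0 : forall m x y a c, Cc br (Dm m) x y a c = 0.
Proof.
have Z00 : forall x y a c, Cc br (Dm 0) x y a c = 0.
  move=> x y a c; rewrite (Cc_ext br (dl' := dl)); first exact: Hc0.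
  by move=> w u v; rewrite /Dm expr0 mulmx1.
have Z01 : forall x y a c, Cc br (Dm 1) x y a c = 0.
  move=> x y a c.
  have := F_id Hb Hd (A := N ^+ 1) (fun w u v => dlX 1 w u v) x y a c.
  have h := Hc1 x y a c; rewrite /Defs.iota !Amap_eq in h.
  have h2 : Cc (deform br (fun x => x *m N ^+ 1)) dl x y a c = 0 by exact: h.
  rewrite h2.
  have E : forall x y a c, Cc br dl x y a c = 0.
    by move=> *; rewrite -(Cc_ext br (dl := Dm 0)) // => w u v; rewrite /Dm expr0 mulmx1.
  rewrite !E; move=> h3; rewrite /Dm; lra.
suff : forall m, (forall x y a c, Cc br (Dm m) x y a c = 0) /\
                 (forall x y a c, Cc br (Dm m.+1) x y a c = 0) by move=> H m; exact: (H m).1.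
elim=> [|m [IH1 IH2]]; first by split.
split=> // x y a c.
have T1 : forall x y, Tq br (N ^+ 1) (N ^+ 1) x y = 0 by move=> *; rewrite expr1 TN.
have := K_lem Hb (Dm_coch m) (fun w u v => Dm_HE m 1 w u v) T1 IH1.
move=> H; rewrite (Cc_ext br (dl' := fun w => Dm m (w *m N ^+ 1 *m N ^+ 1))).
  apply: H => x' y' a' c'; rewrite -(IH2 x' y' a' c'); apply: Cc_ext => w u v.
  by rewrite /Dm mxpow.
by move=> w u v; rewrite /Dm !mxpow.
Qed.

Lemma Zij i j x y a c : Cc (deform br (fun x => x *m N ^+ i)) (Dm j) x y a c = 0.
Proof.
rewrite (F_id Hb (Dm_coch j) (fun w u v => Dm_HE j i w u v)) !Z0.
rewrite (Cc_ext br (dl' := Dm (i + j))) ?Z0; first by rewrite !subr0 !addr0.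
by move=> w u v; rewrite /Dm mxpow.
Qed.

Lemma dtn_eq j xi a c : delta_tn dl N j xi a c = Dm j xi a c.
Proof.
rewrite /delta_tn /Defs.iota /tnmap /nmap -trX dlX dlXl /Dm; ring.
Qed.

Lemma nuR j u v : dualbr dl u (v *m (N^T) ^+ j) = dualbr dl u v *m (N^T) ^+ j.
Proof.
apply/rowP => k; rewrite entry_mx pair_dualbr // mxE -trX dlX trmxK; done.
Qed.

Lemma nuL j u v : dualbr dl (u *m (N^T) ^+ j) v = dualbr dl u v *m (N^T) ^+ j.
Proof.
apply/rowP => k; rewrite entry_mx pair_dualbr // mxE -trX dlXl trmxK; done.
Qed.


Lemma mu_lie i : is_lie_bracket (deform br (nmap N i)).
Proof. exact: (lie_deform Hl (fun x y => Tq_pow Hl TN i i x y)). Qed.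

Lemma mu_compat i i' (a c : R) :
  is_lie_bracket (fun x y => a *: deform br (nmap N i) x y + c *: deform br (nmap N i') x y).
Proof.
apply: (lie_ext _ (lie_deform (A := a *: N ^+ i + c *: N ^+ i') Hl _)).
- move=> x y; rewrite /deform /nmap !mulmxDr -!scalemxAr; expd Hb.
  rewrite ?(blZ Hb, brZ Hb) -?scalemxAl ?(blZ Hb, brZ Hb) -?scalemxAl.
  apply/rowP => k; ent k; ring.
- move=> x y; rewrite (TqDl Hb) !(TqDr Hb) ?(TqZl Hb, TqZr Hb) !(Tq_pow Hl TN) !scaler0 ?add0r ?addr0 ?scaler0 //.
Qed.

Lemma nu_deform j u v : deform (dualbr dl) (tnmap N j) u v = dualbr dl u v *m (N^T) ^+ j.
Proof. by rewrite /deform /tnmap nuL nuR addrK. Qed.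

Lemma nu_lie j : is_lie_bracket (deform (dualbr dl) (tnmap N j)).
Proof.
apply: (@lie_ext (fun u v => dualbr dl u v *m (N^T) ^+ j)).
  by move=> u v; rewrite nu_deform.
exact: lie_scaled Hnu (nuL j) (nuR j).
Qed.

Lemma nu_compat j j' (a c : R) :
  is_lie_bracket (fun x y => a *: deform (dualbr dl) (tnmap N j) x y
                            + c *: deform (dualbr dl) (tnmap N j') x y).
Proof.
have Hnb := Hnu.1.
apply: (@lie_ext (fun u v => dualbr dl u v *m (a *: (N^T) ^+ j + c *: (N^T) ^+ j'))).
  by move=> u v; rewrite !nu_deform mulmxDr -!scalemxAr.
apply: lie_scaled Hnu _ _ => u v.
- by rewrite mulmxDr -!scalemxAr (blD Hnb) !(blZ Hnb) !nuL mulmxDr -!scalemxAr.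
- by rewrite mulmxDr -!scalemxAr (brD Hnb) !(brZ Hnb) !nuR mulmxDr -!scalemxAr.
Qed.

Lemma dualbr_dtn j u v : dualbr (delta_tn dl N j) u v = dualbr dl u v *m (N^T) ^+ j.
Proof. by apply/rowP => k; rewrite entry_mx pair_dualbr // mxE dtn_eq /Dm -trX trmxK. Qed.

Lemma main_ij i j :
     is_lie_bracket (deform br (nmap N i)) /\
     is_lie_bracket (deform (dualbr dl) (tnmap N j)) /\
     (forall xi e1 e2, pair (deform (dualbr dl) (tnmap N j) e1 e2) xi
                       = delta_tn dl N j xi e1 e2) /\
     cocycle (Amap br N i) (deform br (nmap N i)) (delta_tn dl N j) /\
     is_lie_bialgebra (deform br (nmap N i)) (delta_tn dl N j).
Proof.
split; first exact: mu_lie.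
split; first exact: nu_lie.
split.
  by move=> xi e1 e2; rewrite nu_deform -trX pair_mx pair_dualbr // dtn_eq.
split.
  move=> x y a c; rewrite /Defs.iota !Amap_eq !dtn_eq /nmap. exact: (Zij i j x y a c).
split; first exact: mu_lie.
split.
  apply: (cochain_ext _ (Dm_coch j)) => w u v; by rewrite dtn_eq.
split.
  move=> x y a c; rewrite /Defs.iota !dtn_eq /nmap; exact: (Zij i j x y a c).
apply: (@lie_ext (fun u v => dualbr dl u v *m (N^T) ^+ j)).
  by move=> u v; rewrite dualbr_dtn.
exact: lie_scaled Hnu (nuL j) (nuR j).
Qed.
End Main.
End S.

Theorem mainTheorem13 (R : realType) (d : nat) (br : 'rV[R]_d -> 'rV[R]_d -> 'rV[R]_d)
  (dl : 'rV[R]_d -> 'rV[R]_d -> 'rV[R]_d -> R) (N : 'M[R]_d) :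
  is_almost_NL br dl N ->
  is_nijenhuis br N ->
  (forall xi e1 e2, dl xi e1 (tnmap N 1 e2) = dl (nmap N 1 xi) e1 e2) ->
  (forall i j : nat,
     is_lie_bracket (deform br (nmap N i)) /\
     is_lie_bracket (deform (dualbr dl) (tnmap N j)) /\
     (forall xi e1 e2, pair (deform (dualbr dl) (tnmap N j) e1 e2) xi
                       = delta_tn dl N j xi e1 e2) /\
     cocycle (Amap br N i) (deform br (nmap N i)) (delta_tn dl N j) /\
     is_lie_bialgebra (deform br (nmap N i)) (delta_tn dl N j)) /\
  (forall (i i' : nat) (a b : R),
     is_lie_bracket (fun x y => a *: deform br (nmap N i) x y
                                + b *: deform br (nmap N i') x y)) /\
  (forall (j j' : nat) (a b : R),
     is_lie_bracket (fun x y => a *: deform (dualbr dl) (tnmap N j) x y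
                                + b *: deform (dualbr dl) (tnmap N j') x y)).
Proof.
move=> H1 H2 H3; split; [|split].
- move=> i j; exact: (main_ij H1 H2 H3 i j).
- move=> i i' a b; exact: (mu_compat H1 H2 i i' a b).
- move=> j j' a b; exact: (nu_compat H1 H3 j j' a b).
Qed.
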